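(* For all $\varepsilon'>0$ and $\delta>0$ there exists $\varepsilon=\varepsilon(\varepsilon',\delta)>0$ such that the following holds. Let $(V_1,V_2,V_3)$ be an $\varepsilon$-typical $(\varepsilon,p)$-regular triple in a graph in which every pair $(V_i,V_j)$ has density at least $\delta p$. Assume moreover that the endpoints of no edge between $V_2$ and $V_3$ have more than $4p^2|V_1|$ common neighbours in $V_1$. Then $V_1$ contains at most $\varepsilon'|V_1|$ vertices that are not $\varepsilon'$-good.
   Context: For disjoint $X,Y$, $d(X,Y)=e(X,Y)/(|X||Y|)$; $x=(1\pm a)y$ means $x\in[(1-a)y,(1+a)y]$. A pair $(X,Y)$ is $(\varepsilon,p)$-regular if $|d(X,Y)-d(X',Y')|\le\varepsilon p$ for all $X'\subset X,Y'\subset Y$ with $|X'|\ge\varepsilon|X|,|Y'|\ge\varepsilon|Y|$; a triple is $(\varepsilon,p)$-regular if all three pairs are. Write $d(V_i,V_j)=d_{ij}p$. For $\{i,j,k\}=\{1,2,3\}$, $v\in V_i$ is $\varepsilon$-typical if with $N_j=N(v)\cap V_j$, $N_k=N(v)\cap V_k$: $|N_j|=(1\pm\varepsilon)d_{ij}p|V_j|$, $|N_k|=(1\pm\varepsilon)d_{ik}p|V_k|$, and there exist $N_j'\subset N_j,N_k'\subset N_k$ with $|N_j'|\ge(1-\varepsilon)|N_j|,|N_k'|\ge(1-\varepsilon)|N_k|$ such that $(N_j',N_k')$ is $(\varepsilon,p)$-regular of density $(1\pm\varepsilon)d_{jk}p$. The triple is $\varepsilon$-typical if it is $(\varepsilon,p)$-regular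 and for each $i$ all but at most $\varepsilon|V_i|$ vertices of $V_i$ are $\varepsilon$-typical. An edge $uw$, $u\in V_j$, $w\in V_k$, is $\varepsilon'$-good if $u,w$ have at least $(1-\varepsilon')d_{ij}d_{ik}p^2|V_i|$ common neighbours in $V_i$. A vertex $v\in V_i$ is $\varepsilon'$-good if it is $\varepsilon'$-typical and at most $\varepsilon' d_{12}d_{13}d_{23}p^3|V_j||V_k|$ edges between $N(v)\cap V_j$ and $N(v)\cap V_k$ are not $\varepsilon'$-good. *)

(* Defs.v *)
From HB Require Import structures.
From mathcomp Require Import all_boot all_order all_algebra.
From mathcomp Require Import reals.
Set Implicit Arguments. Unset Strict Implicit. Unset Printing Implicit Defensive.
Import Order.TTheory GRing.Theory Num.Theory.
Local Open Scope ring_scope.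

Section Defs.
Variable R : realType.
Variable T : finType.
Variable e : rel T.

Definition e_between (X Y : {set T}) : nat :=
  #|[set xy : T * T | [&& xy.1 \in X, xy.2 \in Y & e xy.1 xy.2]]|.

Definition dens (X Y : {set T}) : R :=
  (e_between X Y)%:R / (#|X| * #|Y|)%:R.

Definition approx (a x y : R) : bool := ((1 - a) * y <= x) && (x <= (1 + a) * y).

Definition regular_pair (eps p : R) (X Y : {set T}) : bool :=
  [forall X' : {set T}, forall Y' : {set T},
    [&& X' \subset X, Y' \subset Y, eps * #|X|%:R <= #|X'|%:R
      & eps * #|Y|%:R <= #|Y'|%:R] ==>
    (`|dens X Y - dens X' Y'| <= eps * p)].

Definition regular_triple (eps p : R) (V1 V2 V3 : {set T}) : bool :=
  [&& regular_pair eps p V1 V2, regular_pair eps p V1 V3 & regular_pair eps p V2 V3].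

Definition nbhd (v : T) (X : {set T}) : {set T} := [set u in X | e v u].

(* v in Vi is eps-typical w.r.t. the other two classes Vj, Vk.
   Note d_ij p = dens Vi Vj, etc. *)
Definition typical_vertex (eps p : R) (Vi Vj Vk : {set T}) (v : T) : bool :=
  [&& v \in Vi,
      approx eps #|nbhd v Vj|%:R (dens Vi Vj * #|Vj|%:R),
      approx eps #|nbhd v Vk|%:R (dens Vi Vk * #|Vk|%:R) &
      [exists Nj' : {set T}, exists Nk' : {set T},
        [&& Nj' \subset nbhd v Vj, Nk' \subset nbhd v Vk,
            (1 - eps) * #|nbhd v Vj|%:R <= #|Nj'|%:R,
            (1 - eps) * #|nbhd v Vk|%:R <= #|Nk'|%:R,
            regular_pair eps p Nj' Nk' &
            approx eps (dens Nj' Nk') (dens Vj Vk)]]].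

Definition atypical_set (eps p : R) (Vi Vj Vk : {set T}) : {set T} :=
  [set v in Vi | ~~ typical_vertex eps p Vi Vj Vk v].

Definition typical_triple (eps p : R) (V1 V2 V3 : {set T}) : bool :=
  [&& regular_triple eps p V1 V2 V3,
      #|atypical_set eps p V1 V2 V3|%:R <= eps * #|V1|%:R,
      #|atypical_set eps p V2 V1 V3|%:R <= eps * #|V2|%:R &
      #|atypical_set eps p V3 V1 V2|%:R <= eps * #|V3|%:R].

Definition common_nbhd (u w : T) (X : {set T}) : {set T} :=
  [set x in X | e u x && e w x].

Definition good_edge (eps' : R) (Vi Vj Vk : {set T}) (u w : T) : bool :=
  (1 - eps') * dens Vi Vj * dens Vi Vk * #|Vi|%:R <= #|common_nbhd u w Vi|%:R.

Definition good_vertex (eps' p : R) (Vi Vj Vk : {set T}) (v : T) : bool :=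
  typical_vertex eps' p Vi Vj Vk v &&
  (#|[set uw : T * T | [&& uw.1 \in nbhd v Vj, uw.2 \in nbhd v Vk,
                           e uw.1 uw.2 & ~~ good_edge eps' Vi Vj Vk uw.1 uw.2]]|%:R
     <= eps' * (dens Vi Vj * dens Vi Vk * dens Vj Vk) * (#|Vj| * #|Vk|)%:R).

End Defs.

Arguments dens {R T} e X Y.
Arguments regular_pair {R T} e eps p X Y.
Arguments regular_triple {R T} e eps p V1 V2 V3.
Arguments typical_vertex {R T} e eps p Vi Vj Vk v.
Arguments atypical_set {R T} e eps p Vi Vj Vk.
Arguments typical_triple {R T} e eps p V1 V2 V3.
Arguments good_edge {R T} e eps' Vi Vj Vk u w.
Arguments good_vertex {R T} e eps' p Vi Vj Vk v.
Arguments approx {R} a x y.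

(* Main.v *)
Require Import Defs.
From HB Require Import structures.
From mathcomp Require Import all_boot all_order all_algebra.
From mathcomp Require Import reals.
From mathcomp Require Import ring lra.
Import Order.TTheory GRing.Theory Num.Theory.
Local Open Scope ring_scope.
Set Implicit Arguments. Unset Strict Implicit. Unset Printing Implicit Defensive.


Lemma card_pairR (R : numDomainType) (T : finType) (P : T -> T -> bool) :
  (#|[set uw : T * T | P uw.1 uw.2]|%:R : R) = \sum_u \sum_w (P u w)%:R.
Proof.
rewrite pair_big /= -sum1_card natr_sum big_mkcond /=.
apply: eq_bigr => uw _; rewrite inE; by case: (P _ _).
Qed.

Lemma card_setR (R : numDomainType) (T : finType) (P : pred T) :
  (#|[set u : T | P u]|%:R : R) = \sum_u (P u)%:R.
Proof.
rewrite -sum1_card natr_sum big_mkcond /=.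
apply: eq_bigr => u _; rewrite inE; by case: (P _).
Qed.

Lemma e_between_sumR (R : numDomainType) (T : finType) (e : rel T) X Y :
  ((e_between e X Y)%:R : R) = \sum_(y in Y) #|[set x in X | e x y]|%:R.
Proof.
rewrite /e_between (card_pairR R (fun x y => [&& x \in X, y \in Y & e x y])).
rewrite exchange_big /= [RHS]big_mkcond /=; apply: eq_bigr => y _.
case: (boolP (y \in Y)) => yY.
  by rewrite card_setR; apply: eq_bigr => x _.
by rewrite big1 // => x _; rewrite andbF.
Qed.

Lemma e_between_sym (T : finType) (e : rel T) X Y :
  symmetric e -> e_between e X Y = e_between e Y X.
Proof.
move=> se; apply/eqP; rewrite -(eqr_nat rat); apply/eqP.
rewrite /e_between !(card_pairR _ (fun x y => [&& x \in _, y \in _ & e x y])).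
rewrite exchange_big /=; apply: eq_bigr => x _; apply: eq_bigr => y _.
by rewrite se andbCA.
Qed.

Lemma e_between_le (T : finType) (e : rel T) X Y :
  (e_between e X Y <= #|X| * #|Y|)%N.
Proof.
rewrite -cardsX /e_between; apply: subset_leq_card; apply/subsetP => -[x y].
by rewrite !inE /= => /and3P[-> ->].
Qed.

Lemma e_betweenE (R : realType) (T : finType) (e : rel T) X Y :
  ((e_between e X Y)%:R : R) = dens e X Y * (#|X| * #|Y|)%:R.
Proof.
rewrite /dens; have [h|nz] := eqVneq (#|X| * #|Y|)%N 0%N.
  by have := e_between_le e X Y; rewrite h leqn0 => /eqP ->; rewrite mulr0.
by rewrite divfK // pnatr_eq0.
Qed.

Lemma dens_ge0 (R : realType) (T : finType) (e : rel T) X Y : 0 <= (dens e X Y : R).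
Proof. by rewrite /dens divr_ge0. Qed.

Lemma dens_sym (R : realType) (T : finType) (e : rel T) X Y :
  symmetric e -> (dens e X Y : R) = dens e Y X.
Proof. by move=> se; rewrite /dens e_between_sym // mulnC. Qed.


Lemma approx_mono (R : realType) (a b x y : R) :
  0 <= y -> a <= b -> approx a x y -> approx b x y.
Proof.
move=> y0 ab /andP[h1 h2]; apply/andP; split; nra.
Qed.

Lemma regular_mono (R : realType) (T : finType) (e : rel T) (a b p : R) X Y :
  0 <= p -> a <= b -> regular_pair e a p X Y -> regular_pair e b p X Y.
Proof.
move=> p0 ab /forallP h; apply/forallP => X'; apply/forallP => Y'.
have /forallP/(_ Y')/implyP H := h X'; apply/implyP => /and4P[s1 s2 c1 c2].
have hX : 0 <= (#|X|%:R : R) by [].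
have hY : 0 <= (#|Y|%:R : R) by [].
apply: le_trans (H _) _; last by rewrite ler_wpM2r.
apply/and4P; split => //.
  by apply: le_trans c1; rewrite ler_wpM2r.
by apply: le_trans c2; rewrite ler_wpM2r.
Qed.

Lemma typical_mono (R : realType) (T : finType) (e : rel T) (a b p : R) Vi Vj Vk v :
  0 <= p -> a <= b -> typical_vertex e a p Vi Vj Vk v -> typical_vertex e b p Vi Vj Vk v.
Proof.
move=> p0 ab /and4P[h1 h2 h3 /existsP[N1 /existsP[N2 /and5P[s1 s2 c1 c2 /andP[r d]]]]].
apply/and4P; split => //.
- by apply: approx_mono h2 => //; rewrite mulr_ge0 // dens_ge0.
- by apply: approx_mono h3 => //; rewrite mulr_ge0 // dens_ge0.
apply/existsP; exists N1; apply/existsP; exists N2; apply/and5P; split => //.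
- by apply: le_trans c1; rewrite ler_wpM2r // lerB.
- by apply: le_trans c2; rewrite ler_wpM2r // lerB.
apply/andP; split; first exact: regular_mono r.
by apply: approx_mono d => //; rewrite dens_ge0.
Qed.


Lemma pad_set (R : realType) (T : finType) (a : R) (V A : {set T}) :
  a <= 1 -> 1 <= a * #|V|%:R -> A \subset V -> #|A|%:R <= a * #|V|%:R ->
  exists A' : {set T}, [/\ A \subset A', A' \subset V, a * #|V|%:R <= #|A'|%:R &
                 #|A'|%:R <= 2 * a * #|V|%:R].
Proof.
move=> a1 aV1 AV hA.
suff H: forall n B, #|V :\: B| = n -> A \subset B -> B \subset V ->
    #|B|%:R <= 2 * a * #|V|%:R ->
    exists A' : {set T}, [/\ A \subset A', A' \subset V, a * #|V|%:R <= #|A'|%:R &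
                 #|A'|%:R <= 2 * a * #|V|%:R].
  by apply: (H _ A erefl (subxx A) AV); lra.
elim=> [|n IH] B hn AB BV hB.
  have VB : V \subset B by rewrite -setD_eq0 -cards_eq0 hn.
  have eBV : B = V by apply/eqP; rewrite eqEsubset BV VB.
  exists B; split => //.
  rewrite eBV; have : 0 <= (#|V|%:R : R) by [].
  nra.
case: (boolP (a * #|V|%:R <= #|B|%:R)) => h; first by exists B.
move: h; rewrite -real_ltNge ?num_real // => h.
have : (0 < #|V :\: B|)%N by rewrite hn.
case/card_gt0P => x xVB.
have xB : x \notin B by move: xVB; rewrite inE => /andP[].
have xV : x \in V by move: xVB; rewrite inE => /andP[].
apply: (IH (x |: B)).
- move: hn; rewrite (cardsD1 x (V :\: B)) xVB add1n => -[<-].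
  by apply: eq_card => y; rewrite !inE; case: (y == x); case: (y \in V); case: (y \in B).
- by apply: (subset_trans AB); exact: subsetUr.
- by rewrite subUset sub1set xV BV.
rewrite cardsU1 xB add1n -addn1 natrD; lra.
Qed.


Lemma e_between_mono (T : finType) (e : rel T) (X X' Y Y' : {set T}) :
  X \subset X' -> Y \subset Y' -> (e_between e X Y <= e_between e X' Y')%N.
Proof.
move=> /subsetP sX /subsetP sY; apply: subset_leq_card; apply/subsetP => -[x y].
rewrite !inE /= => /and3P[hx hy ->]; by rewrite sX ?sY.
Qed.

Lemma atyp_edges (R : realType) (T : finType) (e : rel T) (eps p : R) (V2 V3 A : {set T}) :
  0 <= eps -> eps <= 1/2 -> 0 <= p -> A \subset V2 -> #|A|%:R <= eps * #|V2|%:R ->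
  regular_pair e eps p V2 V3 ->
  (e_between e A V3)%:R <= 2 * eps * #|V2|%:R * (dens e V2 V3 + eps * p) * #|V3|%:R.
Proof.
move=> e0 e1 p0 AV hA reg.
have d0 := dens_ge0 R e V2 V3.
have rhs0 : 0 <= 2 * eps * #|V2|%:R * (dens e V2 V3 + eps * p) * #|V3|%:R.
  by rewrite !mulr_ge0 // ?addr_ge0 // mulr_ge0.
have [A0|An0] := eqVneq A set0.
  have := e_between_le e A V3; rewrite A0 cards0 mul0n leqn0 => /eqP ->.
  by [].
have A1 : (1 <= #|A|)%N by rewrite card_gt0.
have hV : 1 <= eps * #|V2|%:R by apply: le_trans hA; rewrite ler1n.
have a1 : eps <= 1 by lra.
have [A' [AA' A'V c1 c2]] := pad_set a1 hV AV hA.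
have hV3 : eps * #|V3|%:R <= #|V3|%:R.
  have : 0 <= (#|V3|%:R : R) by [].
  nra.
have /forallP/(_ A')/forallP/(_ V3)/implyP := reg.
rewrite A'V subxx hV3 andbT => /(_ c1); rewrite ler_norml => /andP[hd _].
have hd' : dens e A' V3 <= dens e V2 V3 + eps * p by lra.
apply: le_trans (_ : (e_between e A' V3)%:R <= _).
  by rewrite ler_nat e_between_mono.
rewrite e_betweenE natrM.
have hA'0 : 0 <= (#|A'|%:R : R) by [].
have hV30 : 0 <= (#|V3|%:R : R) by [].
have dA0 := dens_ge0 R e A' V3.
have : dens e A' V3 * #|A'|%:R <= (dens e V2 V3 + eps * p) * (2 * eps * #|V2|%:R).
  apply: ler_pM => //.
move=> h; have := ler_wpM2r hV30 h.
move: (dens e A' V3) (dens e V2 V3) => x y; nra.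
Qed.


Lemma typ_bad (R : realType) (T : finType) (e : rel T) (eps eta eps' p delta : R)
  (V1 V2 V3 : {set T}) u :
  symmetric e -> 0 <= eps -> eps <= 1 -> eta <= 1 -> 0 < p -> 0 <= delta ->
  delta * p <= dens e V1 V3 -> eps < (eta - eps) * delta ->
  1 - eps' <= (1 - eta) * (1 - eps) ^+ 2 ->
  typical_vertex e eps p V2 V1 V3 u ->
  #|[set w in nbhd e u V3 | ~~ good_edge e eps' V1 V2 V3 u w]|%:R
     <= 2 * eps * #|nbhd e u V3|%:R.
Proof.
move=> se e0 e1 eta1 p0 d0 hd13 heta heps'.
move=> /and4P[uV2 hN1 hN3 /existsP[N1 /existsP[N3 /and5P[s1 s3 c1 c3 /andP[reg hd]]]]].
set d13 := (dens e V1 V3 : R).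
have d13ge : 0 <= d13 by apply: dens_ge0.
have d12ge : 0 <= (dens e V1 V2 : R) by apply: dens_ge0.
set W := [set w in N3 | #|nbhd e w N1|%:R <= (1 - eta) * d13 * #|N1|%:R].
have good : forall w, w \in N3 -> w \notin W -> good_edge e eps' V1 V2 V3 u w.
  move=> w wN3; rewrite inE wN3 /= -real_ltNge ?num_real // => hk.
  rewrite /good_edge.
  have hc : (#|nbhd e w N1| <= #|common_nbhd e u w V1|)%N.
    apply: subset_leq_card; apply/subsetP => x; rewrite !inE => /andP[xN1 ->].
    by move/subsetP: s1 => /(_ x xN1); rewrite !inE => /andP[-> ->].
  move/andP: hN1 => [hN1 _]; rewrite -(dens_sym _ _ _ se) in hN1.
  set a := (#|nbhd e u V1|%:R : R) in hN1 c1 *.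
  set n1 := (#|N1|%:R : R) in c1 hk *.
  set k := (#|nbhd e w N1|%:R : R) in hk.
  have hc' : k <= #|common_nbhd e u w V1|%:R by rewrite ler_nat.
  have v0 : 0 <= (#|V1|%:R : R) by [].
  set v := (#|V1|%:R : R) in hN1 v0 *.
  set d12 := (dens e V1 V2 : R) in hN1 d12ge *.
  have eta0 : 0 <= 1 - eta by lra.
  have ee0 : 0 <= 1 - eps by lra.
  have s1' : (1 - eta) * d13 * ((1 - eps) * a) <= (1 - eta) * d13 * n1.
    by apply: ler_wpM2l => //; rewrite mulr_ge0.
  have s2' : (1 - eta) * d13 * (1 - eps) * ((1 - eps) * d12 * v)
              <= (1 - eta) * d13 * (1 - eps) * a.
    by apply: ler_wpM2l; [exact: mulr_ge0 (mulr_ge0 eta0 d13ge) ee0 | rewrite -mulrA].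
  have s3' : (1 - eps') * (d12 * d13 * v) <= (1 - eta) * (1 - eps) ^+ 2 * (d12 * d13 * v).
    by apply: ler_wpM2r => //; exact: mulr_ge0 (mulr_ge0 d12ge d13ge) v0.
  rewrite -/d13; apply: le_trans hc'; apply: ltW; apply: le_lt_trans hk.
  apply: le_trans s1'.
  have -> : (1 - eta) * d13 * ((1 - eps) * a) = (1 - eta) * d13 * (1 - eps) * a by ring.
  apply: le_trans s2'.
  have -> : (1 - eps') * d12 * d13 * v = (1 - eps') * (d12 * d13 * v) by ring.
  apply: (le_trans s3'); rewrite le_eqVlt; apply/orP; left; apply/eqP; ring.
have WN3 : W \subset N3 by apply/subsetP => w; rewrite inE => /andP[].
have hdW : dens e N1 W <= (1 - eta) * d13.
  have hsum : (e_between e N1 W)%:R <= #|W|%:R * ((1 - eta) * d13 * #|N1|%:R).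
    rewrite e_between_sumR -sum1_card natr_sum mulr_suml.
    apply: ler_sum => y; rewrite inE => /andP[_ hy]; rewrite mul1r.
    apply: le_trans hy; rewrite ler_nat; apply: subset_leq_card.
    by apply/subsetP => x; rewrite !inE se.
  rewrite /dens; have [h0|hn0] := eqVneq (#|N1| * #|W|)%N 0%N.
    by rewrite h0 invr0 mulr0 mulr_ge0 //; lra.
  rewrite ler_pdivrMr ?ltr0n ?lt0n // natrM.
  apply: le_trans hsum _; rewrite le_eqVlt; apply/orP; left; apply/eqP; ring.
have Wsmall : #|W|%:R <= eps * #|N3|%:R.
  rewrite real_leNgt ?num_real //; apply/negP => hW.
  have hN1e : eps * #|N1|%:R <= #|N1|%:R.
    have : 0 <= (#|N1|%:R : R) by [].
    nra.
  have /forallP/(_ N1)/forallP/(_ W)/implyP := reg.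
  rewrite subxx WN3 hN1e (ltW hW) => /(_ isT); rewrite ler_norml => /andP[_ h2].
  move/andP: hd => [hd _].
  have epos : 0 < eta - eps.
    have : 0 <= eps * delta by rewrite mulr_ge0.
    nra.
  have hdd : (eta - eps) * (delta * p) <= (eta - eps) * d13.
    by apply: ler_wpM2l => //; apply: ltW.
  move: hdd h2 hd hdW heta; rewrite -/d13.
  move: (dens e N1 N3) (dens e N1 W) => x y.
  nra.
have hsub : [set w in nbhd e u V3 | ~~ good_edge e eps' V1 V2 V3 u w]
    \subset (nbhd e u V3 :\: N3) :|: W.
  apply/subsetP => w; rewrite !inE => /andP[wN wg].
  case: (boolP (w \in N3)) => wN3 /=; last by rewrite wN.
  by apply/negPn/negP => hnW; move: wg; rewrite good // inE wN3 /=.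
apply: le_trans (_ : (#|(nbhd e u V3 :\: N3) :|: W|%:R : R) <= _).
  by rewrite ler_nat subset_leq_card.
apply: le_trans (_ : (#|nbhd e u V3 :\: N3|%:R + #|W|%:R : R) <= _).
  by rewrite -natrD ler_nat cardsU leq_subr.
have hID := cardsID N3 (nbhd e u V3).
rewrite (setIidPr s3) in hID.
have hN3le : (#|N3| <= #|nbhd e u V3|)%N by apply: subset_leq_card.
move: hID => /(congr1 (fun n : nat => (n%:R : R))); rewrite natrD => hID.
have : (#|N3|%:R : R) <= #|nbhd e u V3|%:R by rewrite ler_nat.
move: hID Wsmall c3; move: (#|N3|%:R : R) (#|nbhd e u V3 :\: N3|%:R : R) (#|W|%:R : R) (#|nbhd e u V3|%:R : R) => a b c d.
nra.
Qed.


Lemma sum_ind (R : numDomainType) (T : finType) (A : {set T}) (c : T -> R) :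
  \sum_u (u \in A)%:R * c u = \sum_(u in A) c u.
Proof.
rewrite [RHS]big_mkcond; apply: eq_bigr => u _.
by case: (u \in A); rewrite ?mul1r ?mul0r.
Qed.

Lemma total_bad (R : realType) (T : finType) (e : rel T) (eps eta eps' p delta : R)
  (V1 V2 V3 : {set T}) :
  symmetric e -> 0 <= eps -> eps <= 1/2 -> eta <= 1 -> 0 < p -> 0 <= delta ->
  eps <= delta ->
  delta * p <= dens e V1 V3 -> delta * p <= dens e V2 V3 -> eps < (eta - eps) * delta ->
  1 - eps' <= (1 - eta) * (1 - eps) ^+ 2 ->
  regular_pair e eps p V2 V3 ->
  #|atypical_set e eps p V2 V1 V3|%:R <= eps * #|V2|%:R ->
  #|[set uw : T * T | [&& uw.1 \in V2, uw.2 \in V3, e uw.1 uw.2 &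
                        ~~ good_edge e eps' V1 V2 V3 uw.1 uw.2]]|%:R
    <= 8 * eps * dens e V2 V3 * (#|V2|%:R * #|V3|%:R).
Proof.
move=> se e0 e1 eta1 p0 d0 ed h13 h23 heta heps' reg hA.
set A := atypical_set e eps p V2 V1 V3.
set d23 := (dens e V2 V3 : R).
have d23ge : 0 <= d23 by apply: dens_ge0.
set K := 4 * eps * d23 * #|V3|%:R.
rewrite (card_pairR R (fun u w => [&& u \in V2, w \in V3, e u w &
                        ~~ good_edge e eps' V1 V2 V3 u w])).
have key : forall u, \sum_w ([&& u \in V2, w \in V3, e u w &
                        ~~ good_edge e eps' V1 V2 V3 u w])%:R
      <= (u \in A)%:R * #|[set x in V3 | e u x]|%:R + (u \in V2)%:R * K.
  move=> u; case: (boolP (u \in V2)) => uV2; last first.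
    by rewrite big1 ?mul0r ?addr0 ?mulr_ge0 ?inE ?(negbTE uV2) //= => w _.
  rewrite -card_setR mul1r.
  case: (boolP (u \in A)) => uA.
    rewrite (_ : (true%:R : R) = 1) // !mul1r -[X in X <= _]addr0; apply: lerD; last first.
      by rewrite /K; apply: mulr_ge0 => //; apply: mulr_ge0 => //; apply: mulr_ge0 => //; lra.
    rewrite ler_nat; apply: subset_leq_card; apply/subsetP => w.
    by rewrite !inE => /and4P[_ -> -> _].
  rewrite mul0r add0r.
  have ut : typical_vertex e eps p V2 V1 V3 u.
    by move: uA; rewrite /A inE uV2 /= negbK.
  have e1' : eps <= 1 by lra.
  have := typ_bad se e0 e1' eta1 p0 d0 h13 heta heps' ut.
  move=> hb.
  apply: le_trans (_ : _ <= #|[set w in nbhd e u V3 | ~~ good_edge e eps' V1 V2 V3 u w]|%:R) _.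
    rewrite ler_nat; apply: subset_leq_card; apply/subsetP=> w.
    by rewrite !inE /= => /and3P[-> -> ->].
  apply: le_trans hb _.
  rewrite /K.
  move: ut => /and4P[_ _ /andP[_ hN3] _].
  have : 0 <= (#|V3|%:R : R) by [].
  rewrite -/d23 in hN3.
  move: (#|V3|%:R : R) (#|nbhd e u V3|%:R : R) hN3 => a b hN3 ha.
  have x0 := mulr_ge0 (mulr_ge0 e0 d23ge) ha.
  have e20 : 0 <= 2 * eps by lra.
  have hb2 := ler_wpM2l e20 hN3.
  have : 0 <= (1 - eps) * (eps * d23 * a) by rewrite mulr_ge0 //; lra.
  move=> hx; apply: (le_trans hb2).
  rewrite -subr_ge0 (_ : _ - _ = 2 * ((1 - eps) * (eps * d23 * a))); last by ring.
  by rewrite mulr_ge0.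
apply: le_trans (ler_sum _ (fun u _ => key u)) _.
rewrite big_split /= !sum_ind sumr_const.
have hE : \sum_(u in A) (#|[set x in V3 | e u x]|%:R : R) = (e_between e A V3)%:R.
  rewrite e_between_sym // e_between_sumR; apply: eq_bigr => u _.
  by congr (_%:R); apply: eq_card => x; rewrite !inE se.
rewrite hE.
have AV2 : A \subset V2 by apply/subsetP => x; rewrite inE => /andP[].
have := atyp_edges e0 e1 (ltW p0) AV2 hA reg.
rewrite -/d23 -mulr_natl /K => h.
apply: (le_trans (lerD h (lexx _))).
have epd : eps * p <= d23.
  apply: le_trans h23; apply: ler_wpM2r; [exact: ltW|by []].
have s0 : 0 <= eps * #|V2|%:R * #|V3|%:R by rewrite !mulr_ge0.
rewrite -subr_ge0 (_ : _ - _ = 2 * ((d23 - eps * p) * (eps * #|V2|%:R * #|V3|%:R))); last by ring.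
rewrite mulr_ge0 // mulr_ge0 //; lra.
Qed.


Lemma dcount (R : realType) (T : finType) (e : rel T) (eps' c : R)
  (V1 V2 V3 : {set T}) :
  symmetric e -> 0 <= c ->
  (forall u w, u \in V2 -> w \in V3 -> e u w ->
       #|common_nbhd e u w V1|%:R <= c) ->
  \sum_(v in V1) (#|[set uw : T * T | [&& uw.1 \in nbhd e v V2, uw.2 \in nbhd e v V3,
                           e uw.1 uw.2 & ~~ good_edge e eps' V1 V2 V3 uw.1 uw.2]]|%:R : R)
  <= #|[set uw : T * T | [&& uw.1 \in V2, uw.2 \in V3, e uw.1 uw.2 &
                        ~~ good_edge e eps' V1 V2 V3 uw.1 uw.2]]|%:R * c.
Proof.
move=> se c0 hc.
rewrite (card_setR R (fun uw : T * T => [&& uw.1 \in V2, uw.2 \in V3, e uw.1 uw.2 &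
                        ~~ good_edge e eps' V1 V2 V3 uw.1 uw.2])) mulr_suml.
under eq_bigr => v _ do rewrite (card_setR R (fun uw : T * T => [&& uw.1 \in nbhd e v V2, uw.2 \in nbhd e v V3,
                           e uw.1 uw.2 & ~~ good_edge e eps' V1 V2 V3 uw.1 uw.2])).
rewrite exchange_big /=; apply: ler_sum => -[u w] _ /=.
case: (boolP [&& u \in V2, w \in V3, e u w & ~~ good_edge e eps' V1 V2 V3 u w]).
  move=> /and4P[uV2 wV3 euw ng]; rewrite mul1r.
  apply: le_trans (hc u w uV2 wV3 euw).
  rewrite -sum1_card natr_sum [X in _ <= X]big_mkcond [X in X <= _]big_mkcond /=.
  apply: ler_sum => v _; rewrite !inE uV2 wV3 euw ng /= !andbT.
  by rewrite (se v u) (se v w); case: (_ \in _); case: (e u v); case: (e w v).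
move=> hB; rewrite mul0r big1 // => v _.
apply/eqP; rewrite pnatr_eq0 eqb0; apply: contra hB; rewrite !inE.
by case/and4P => /andP[-> _] /andP[-> _] -> ->.
Qed.


Unset Implicit Arguments.

Lemma dens_pos_card (R : realType) (T : finType) (e : rel T) (X Y : {set T}) :
  0 < (dens e X Y : R) -> (0 < #|X|)%N /\ (0 < #|Y|)%N.
Proof.
rewrite /dens; case: (posnP #|X|) => [->|hx]; first by rewrite mul0n invr0 mulr0 ltxx.
case: (posnP #|Y|) => [->|hy]; first by rewrite muln0 invr0 mulr0 ltxx.
by [].
Qed.

Theorem proposition2p13 (R : realType) (eps' delta : R) :
  0 < eps' -> 0 < delta ->
  exists eps : R, 0 < eps /\
  forall (T : finType) (e : rel T) (V1 V2 V3 : {set T}) (p : R),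
    symmetric e -> irreflexive e ->
    0 < p -> p <= 1 ->
    [disjoint V1 & V2] -> [disjoint V1 & V3] -> [disjoint V2 & V3] ->
    typical_triple e eps p V1 V2 V3 ->
    delta * p <= dens e V1 V2 -> delta * p <= dens e V1 V3 ->
    delta * p <= dens e V2 V3 ->
    (forall u w, u \in V2 -> w \in V3 -> e u w ->
       #|common_nbhd e u w V1|%:R <= 4 * p ^+ 2 * #|V1|%:R) ->
    #|[set v in V1 | ~~ good_vertex e eps' p V1 V2 V3 v]|%:R <= eps' * #|V1|%:R.
Proof.
move=> he hd.
set a := Num.min eps' 1; set d := Num.min delta 1.
have a0 : 0 < a by rewrite lt_min he ltr01.
have a1 : a <= 1 by rewrite ge_min lexx orbT.
have ae : a <= eps' by rewrite ge_min lexx.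
have d0 : 0 < d by rewrite lt_min hd ltr01.
have d1 : d <= 1 by rewrite ge_min lexx orbT.
have dd : d <= delta by rewrite ge_min lexx.
have ad2 : 0 < a * d by rewrite mulr_gt0.
have ad1 : a * d <= 1 by rewrite -(mulr1 1) ler_pM // ltW.
have epsgt : 0 < (a * d) ^+ 2 / 64 by rewrite divr_gt0 // exprn_gt0.
exists ((a * d) ^+ 2 / 64); split => //.
set eps := (a * d) ^+ 2 / 64.
set eta := a / 2.
have eps0 : 0 <= eps by apply: ltW.
have epsad : eps <= a * d / 64.
  rewrite /eps ler_pM2r ?invr_gt0 // expr2 -[X in _ <= X]mulr1 ler_pM2l //.
have e1 : eps <= 1/2 by lra.
have hada : a * d <= a by nra.
have hadd : a * d <= d by nra.
have ea : eps <= a / 64 by lra.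
have ed : eps <= d / 64 by lra.
have eta1 : eta <= 1 by rewrite /eta; lra.
have heta : eps < (eta - eps) * d.
  have h1 : 0 <= (eta - eps - 31 / 64 * a) * d by rewrite mulr_ge0 // /eta; lra.
  rewrite /eta in h1 *; nra.
have heps' : 1 - eps' <= (1 - eta) * (1 - eps) ^+ 2.
  have h1 : 0 <= (1 - eta) * (eps * eps) by rewrite !mulr_ge0 // /eta; lra.
  rewrite /eta in h1 *; nra.
move=> T e V1 V2 V3 p se _ p0 p1 _ _ _ typ h12 h13 h23 hcod.
have dp : forall x, delta * p <= x -> d * p <= x.
  by move=> x; apply: le_trans; rewrite ler_pM2r.
have g12 := dp _ h12; have g13 := dp _ h13; have g23 := dp _ h23.
move: typ => /and4P[/and3P[r12 r13 r23] hA1 hA2 hA3].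
have epsd : eps <= d by lra.
have hB := total_bad se eps0 e1 eta1 p0 (ltW d0) epsd g13 g23 heta heps' r23 hA2.
have c0 : 0 <= 4 * p ^+ 2 * (#|V1|%:R : R) by rewrite !mulr_ge0 // ltW.
have hD := dcount eps' se c0 hcod.
set B := #|[set uw : T * T | _]|%:R in hB hD.
set badc := fun v => (#|[set uw : T * T | [&& uw.1 \in nbhd e v V2, uw.2 \in nbhd e v V3,
                           e uw.1 uw.2 & ~~ good_edge e eps' V1 V2 V3 uw.1 uw.2]]|%:R : R).
set d12 := (dens e V1 V2 : R) in g12 *.
set d13 := (dens e V1 V3 : R) in g13 *.
set d23 := (dens e V2 V3 : R) in g23 hB *.
set thr := eps' * (d12 * d13 * d23) * (#|V2| * #|V3|)%:R.
set At := atypical_set e eps p V1 V2 V3.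
set G := [set v in V1 | thr < badc v].
have hsub : [set v in V1 | ~~ good_vertex e eps' p V1 V2 V3 v] \subset At :|: G.
  apply/subsetP => v; rewrite !inE => /andP[vV1 ng].
  rewrite vV1 /=; case: (boolP (typical_vertex e eps p V1 V2 V3 v)) => ht //=.
  have eeps : eps <= eps' by lra.
  have ht' := typical_mono (ltW p0) eeps ht.
  move: ng; rewrite /good_vertex ht' /= -real_ltNge ?num_real //.
have hcard : #|[set v in V1 | ~~ good_vertex e eps' p V1 V2 V3 v]|%:R
               <= (#|At|%:R + #|G|%:R : R).
  by rewrite -natrD ler_nat; apply: leq_trans (subset_leq_card hsub) _; rewrite cardsU leq_subr.
have badc0 : forall v, 0 <= badc v by [].
have hG : #|G|%:R * thr <= B * (4 * p ^+ 2 * #|V1|%:R).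
  apply: le_trans hD.
  apply: le_trans (_ : \sum_(v in G) badc v <= _).
    rewrite (_ : #|G|%:R * thr = \sum_(v in G) thr); last by rewrite sumr_const mulr_natl.
    by apply: ler_sum => v; rewrite inE => /andP[_ /ltW].
  rewrite -!sum_ind; apply: ler_sum => v.
  case: (boolP (v \in G)) => vG.
    by move: vG; rewrite inE => /andP[-> _].
  by rewrite mul0r mulr_ge0.
have dp0 : 0 < d * p by rewrite mulr_gt0.
have d23p : 0 < d23 by apply: lt_le_trans g23.
have d12p : 0 < d12 by apply: lt_le_trans g12.
have d13p : 0 < d13 by apply: lt_le_trans g13.
have [V2p V3p] := @dens_pos_card _ _ _ _ _ d23p.
have n0 : 0 < (#|V2|%:R * #|V3|%:R : R) by rewrite mulr_gt0 // ltr0n.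
rewrite /thr natrM in hG; clear hD.
move: hA1; rewrite -/At => hA1.
move: hG hB hcard hA1.
have v10 : 0 <= (#|V1|%:R : R) by [].
move: (#|V2|%:R * #|V3|%:R : R) n0 (#|V1|%:R : R) v10 B (#|G|%:R : R) => n n0 v1 v10 B g hG hB hcard hA1'.
have hq : 32 * eps <= (eps' - eps) * eps' * (d ^+ 2).
  have h1 : (a * d) ^+ 2 / 2 <= (eps' - eps) * eps' * (d ^+ 2).
    have h2 : a ^+ 2 / 2 <= (eps' - eps) * eps'.
      have k1 : a * a <= eps' * eps' by apply: ler_pM => //; apply: ltW.
      have k2 : eps * eps' <= eps' / 64 * eps'.
        by apply: ler_wpM2r; [apply: ltW | lra].
      rewrite expr2; nra.
    rewrite exprMn.
    have := ler_wpM2r (exprn_ge0 2 (ltW d0)) h2; lra.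
  rewrite /eps; apply: le_trans h1; rewrite le_eqVlt; apply/orP; left; apply/eqP; by field.
have hprod : (d * p) ^+ 2 <= d12 * d13.
  by rewrite expr2; apply: ler_pM => //; apply: ltW.
set Q := p ^+ 2 * v1 * d23 * n.
have p2 : 0 <= p ^+ 2 by rewrite exprn_ge0 // ltW.
have Q0 : 0 <= Q by rewrite /Q (mulr_ge0 (mulr_ge0 (mulr_ge0 p2 v10) (ltW d23p)) (ltW n0)).
have hR : B * (4 * p ^+ 2 * v1) <= 32 * eps * Q.
  have c0' : 0 <= 4 * p ^+ 2 * v1 by rewrite mulr_ge0 // mulr_ge0.
  apply: le_trans (ler_wpM2r c0' hB) _.
  rewrite /Q le_eqVlt; apply/orP; left; apply/eqP; ring.
have thr0 : 0 < eps' * (d12 * d13 * d23) * n := mulr_gt0 (mulr_gt0 he (mulr_gt0 (mulr_gt0 d12p d13p) d23p)) n0.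
have hL : 32 * eps * Q <= (eps' - eps) * v1 * (eps' * (d12 * d13 * d23) * n).
  have ee0 : 0 <= (eps' - eps) * eps' by rewrite mulr_ge0 //; lra.
  have s1 := ler_wpM2r Q0 hq.
  apply: le_trans s1 _.
  have s2 : (eps' - eps) * eps' * (d * p) ^+ 2 <= (eps' - eps) * eps' * (d12 * d13).
    by apply: ler_wpM2l.
  have s3 := ler_wpM2r (mulr_ge0 (mulr_ge0 v10 (ltW d23p)) (ltW n0)) s2.
  rewrite /Q; move: s3; rewrite !exprMn.
  move=> s3; apply: le_trans (le_trans _ s3) _.
    rewrite le_eqVlt; apply/orP; left; apply/eqP; ring.
  rewrite le_eqVlt; apply/orP; left; apply/eqP; ring.
have hg : g <= (eps' - eps) * v1.
  rewrite -(ler_pM2r thr0); apply: le_trans hG _; apply: le_trans hR hL.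
apply: le_trans hcard _.
lra.
Qed.
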